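(* There is a function $\delta(n)\to0$ such that for every directed graph $G=(V,E)$ with $n$ nodes and every initial state, the convergence time of the \textsc{Random Pick} process is at most $4D\Delta_+\log_2 n$ with probability at least $1-\delta(n)$; and if $G$ is undirected, the convergence time is at most $20n\log_2 n$ with probability at least $1-\delta(n)$.
   Context: $G=(V,E)$ directed, $n=|V|$, $\Gamma_+(v)=\{u:(v,u)\in E\}$, $d_+(v)=|\Gamma_+(v)|$, $\Delta_+=\max_v d_+(v)$. $d(v,u)$ is the length of a shortest directed path from $v$ to $u$ ($\infty$ if none), and $D=\max\{d(v,u): d(v,u)\ne\infty\}$. $G$ is undirected if $(v,u)\in E\iff(u,v)\in E$. A state is a map $V\to\{b,r,u\}$ (blue, red, uncolored); colored means blue or red. \textsc{Random Pick} process: in each round $t=1,2,\dots$, every node $v$ with $d_+(v)\ge1$ picks an out-neighbor $ps_t(v)$ uniformly at random, independently; $\mathcal{S}_t(v)=\mathcal{S}_{t-1}(ps_t(v))$ if $\mathcal{S}_{t-1}(v)=u$ and $\mathcal{S}_{t-1}(ps_t(v))\ne u$, else $\mathcal{S}_t(v)=\mathcal{S}_{t-1}(v)$. A state is stable if no uncolored node has a colored out-neighbor. The convergence time is the smallest $t\ge0$ such that $\mathcal{S}_t$ is stable. *)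

(* Defs.v *)
From mathcomp Require Import all_boot.
From Stdlib Require Import Reals.

Set Implicit Arguments.
Unset Strict Implicit.
Unset Printing Implicit Defensive.

Inductive color := Blue | Red | Uncolored.

Definition is_unc (c : color) : bool :=
  match c with Uncolored => true | _ => false end.

Section RandomPick.
Variable V : finType.
Variable E : rel V.

Definition outN (v : V) : {set V} := [set u | E v u].
Definition outdeg (v : V) : nat := #|outN v|.
Definition maxoutdeg : nat := \max_(v : V) outdeg v.

Fixpoint walk (k : nat) (v u : V) : bool :=
  match k with
  | 0 => v == u
  | k'.+1 => [exists w, E v w && walk k' w u]
  end.

Definition is_dist (v u : V) (k : nat) : Prop :=
  walk k v u /\ forall j, j < k -> ~~ walk j v u.

Definition is_diam (D : nat) : Prop :=
  (exists v u, is_dist v u D) /\ (forall v u k, is_dist v u k -> k <= D).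

Definition state := V -> color.

Definition step (S : state) (p : V -> V) : state :=
  fun v => if is_unc (S v) && ~~ is_unc (S (p v)) then S (p v) else S v.

Definition stable (S : state) : bool :=
  [forall v, forall u, E v u ==> is_unc (S v) ==> is_unc (S u)].

(* A pick sequence for rounds 1..T: c t v = ps_{t+1}(v).  It is valid if
   every node with an out-neighbour picks an out-neighbour; nodes without
   out-neighbours pick nothing (encoded as picking themselves, which has no
   effect). The uniform distribution on valid pick sequences is exactly the
   product of independent uniform picks among out-neighbours. *)
Definition picks (T : nat) := {ffun 'I_T -> {ffun V -> V}}.

Definition valid_picks T (c : picks T) : bool :=
  [forall t, forall v,
     if [exists w, E v w] then E v (c t v) else c t v == v].

Definition pick_at T (c : picks T) (k : nat) : V -> V :=
  match @insub nat (fun k => k < T) 'I_T k with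
  | Some i => c i
  | None => fun v => v
  end.

Fixpoint run T (S0 : state) (c : picks T) (k : nat) : state :=
  match k with
  | 0 => S0
  | k'.+1 => step (run S0 c k') (pick_at c k')
  end.

Definition converged_by T (S0 : state) (c : picks T) : bool :=
  [exists k : 'I_T.+1, stable (run S0 c k)].

Definition prob_conv_by (T : nat) (S0 : state) : R :=
  (INR #|[set c : picks T | valid_picks c &
            converged_by S0 c]|
   / INR #|[set c : picks T | valid_picks c]|)%R.

End RandomPick.

(* Main.v *)
Require Import Defs.
From mathcomp Require Import all_boot zify.
From Stdlib Require Import Classical ClassicalEpsilon.
Set Implicit Arguments. Unset Strict Implicit. Unset Printing Implicit Defensive.

Lemma card_fam (aT rT : finType) (F : aT -> pred rT) :
  #|[pred f : {ffun aT -> rT} | [forall x, F x (f x)]]| = \prod_(x : aT) #|F x|.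
Proof.
have := @card_family aT (fun _ => rT) F.
rewrite foldrE big_map big_enum /= => <-.
by apply: eq_card => f; rewrite !inE.
Qed.

Lemma prod_block T a l m : a + l <= T ->
  \prod_(t < T) (if a <= t < a + l then m else 1) = m ^ l.
Proof.
move=> Hal; rewrite -(big_mkord xpredT (fun t => if a <= t < a + l then m else 1)).
rewrite (big_cat_nat (n:=a)) ?(leq_trans (leq_addr l a) Hal) //=.
rewrite (big_cat_nat (n:=a+l) (leq_addr l a) Hal) /=.
rewrite big_nat_cond big1 ?mul1n; last by move=> i /andP[/andP[_ Hi] _]; rewrite leqNgt Hi.
have -> : \prod_(a + l <= i < T) (if a <= i < a + l then m else 1) = 1.
  rewrite big_nat_cond big1 // => i /andP[/andP[Hi _] _]; rewrite ltnNge Hi andbF //.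
rewrite muln1.
rewrite (eq_big_nat _ _ (F2 := fun _ => m)) ?prod_nat_const_nat ?addKn //.
by move=> i ->.
Qed.

Section Count.
Variable V : finType.
Variable E : rel V.

Definition A (v : V) : pred V := fun w => if [exists w, E v w] then E v w else w == v.

Lemma valid_eq (T : nat) : [set c : picks V T | valid_picks E c] =i
   [pred c : picks V T | [forall t, (fun _ : 'I_T => [pred f : {ffun V -> V} | [forall v, A v (f v)]]) t (c t)]].
Proof.
move=> c; rewrite !inE /valid_picks /A; apply/forallP/forallP => H t.
  by apply/forallP => v; have /forallP := H t; apply.
by apply/forallP => v; have /forallP := H t; apply.
Qed.

Lemma card_valid (T : nat) : #|[set c : picks V T | valid_picks E c]| = (\prod_(v : V) #|A v|) ^ T.
Proof.
rewrite (eq_card (valid_eq (T:=T))) (@card_fam _ _ (fun _ => [pred f : {ffun V -> V} | [forall v, A v (f v)]])).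
rewrite (eq_bigr (fun _ => \prod_(v : V) #|A v|)) ?prod_nat_const ?card_ord //.
by move=> t _; rewrite card_fam.
Qed.

Definition badset (T : nat) (x y : V) (a l : nat) : {set picks V T} :=
  [set c | valid_picks E c & [forall t : 'I_T, (a <= t < a + l) ==> (c t x != y)]].

Lemma card_bad (T : nat) x y a l : E x y -> a + l <= T ->
  #|badset T x y a l| * (outdeg E x) ^ l =
  #|[set c : picks V T | valid_picks E c]| * (outdeg E x).-1 ^ l.
Proof.
move=> Exy Hal.
set G := fun (t : 'I_T) (v : V) => [pred w | A v w && (((a <= t < a + l) && (v == x)) ==> (w != y))].
have -> : #|badset T x y a l| = \prod_(t : 'I_T) \prod_(v : V) #|G t v|.
  rewrite -(eq_bigr _ (fun t _ => @card_fam _ _ (G t))) -(@card_fam _ _ (fun t => [pred f : {ffun V -> V} | [forall v, G t v (f v)]])).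
  apply: eq_card => c; rewrite !inE /valid_picks.
  apply/andP/forallP => [[/forallP H1 /forallP H2] t|H].
    apply/forallP => v; rewrite inE /G /A /=.
    have /forallP := H1 t => /(_ v) ->.
    by case: eqP => [->|]; rewrite ?andbF ?andbT //=; apply: (implyP (H2 t)).
  split; apply/forallP => t; have /forallP H' := H t.
    by apply/forallP => v; have := H' v; rewrite /G /A inE /= => /andP[].
  by apply/implyP => Hb; have := H' x; rewrite /G inE /= eqxx andbT Hb /= => /andP[].
rewrite card_valid.
have -> : (\prod_(v : V) #|A v|) ^ T = \prod_(t : 'I_T) \prod_(v : V) #|A v|.
  by rewrite prod_nat_const card_ord.
rewrite -(prod_block (outdeg E x) Hal) -(prod_block (outdeg E x).-1 Hal).
rewrite -!big_split /=; apply: eq_bigr => t _.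
have Ex : [exists w, E x w] by apply/existsP; exists y.
have Hd : outdeg E x = (outdeg E x).-1.+1.
  by rewrite prednK // /outdeg card_gt0; apply/set0Pn; exists y; rewrite inE.
have HA : #|A x| = outdeg E x.
  by rewrite /outdeg; apply: eq_card => w; rewrite /A inE Ex.
case: ifP => Hb; last first.
  rewrite !muln1; apply: eq_bigr => v _; apply: eq_card => w.
  by rewrite /G inE /= Hb /= andbT.
rewrite (bigD1 x) //= [in RHS](bigD1 x) //= HA.
have -> : #|G t x| = (outdeg E x).-1.
  have Hy : (y \in A x) = true by rewrite /in_mem /= /A Ex.
  have := cardD1 y (A x); rewrite HA Hy add1n => -> /=.
  by apply: eq_card => w; rewrite /G !inE /= Hb eqxx /= andbC.
rewrite (eq_bigr (fun v => #|A v|)); first by by rewrite mulnAC [RHS]mulnAC [_.-1 * _]mulnC.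
move=> v Hv; apply: eq_card => w; rewrite /G inE /= (negbTE Hv) andbF andbT.
by [].
Qed.

End Count.

Section Dyn.
Variable V : finType.
Variable E : rel V.
Variable S0 : state V.

Lemma step_mono (S : state V) p v : ~~ is_unc (S v) -> ~~ is_unc (step S p v).
Proof. rewrite /step /=; case: (S v) => //=. Qed.

Lemma run_mono T (c : picks V T) t t' v : t <= t' ->
  ~~ is_unc (run S0 c t v) -> ~~ is_unc (run S0 c t' v).
Proof.
move=> /subnK <-; elim: (t' - t) => //= k IH H.
by rewrite ?addSn /=; apply: step_mono; apply: IH.
Qed.

Lemma hit_color T (c : picks V T) t x y :
  ~~ is_unc (run S0 c t y) -> pick_at c t x = y -> ~~ is_unc (run S0 c t.+1 x).
Proof.
move=> Hy Hp /=; rewrite /step Hp Hy andbT.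
by case: ifP => // /negbT.
Qed.

Lemma pick_valid T (c : picks V T) : valid_picks E c ->
  forall t v, E v (pick_at c t v) \/ pick_at c t v = v.
Proof.
move=> Hc t v; rewrite /pick_at; case: insubP => [i _ _|_]; last by right.
move/forallP: Hc => /(_ i) /forallP /(_ v).
by case: ifP => _ H; [left|right; apply/eqP].
Qed.

Lemma pick_ord T (c : picks V T) (t : 'I_T) : pick_at c t = c t.
Proof.
rewrite /pick_at; case: insubP => [i _ /val_inj -> //|].
by rewrite ltn_ord.
Qed.

Lemma walk_cat a b x y z : walk E a x y -> walk E b y z -> walk E (a + b) x z.
Proof.
elim: a x => [|a IH] x /=; first by move/eqP ->.
move=> /existsP[w /andP[Exw Hw]] Hb; apply/existsP; exists w.
by rewrite Exw (IH _ Hw Hb).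
Qed.

Lemma reach_of_colored T (c : picks V T) t v : valid_picks E c ->
  ~~ is_unc (run S0 c t v) -> exists u j, walk E j v u /\ ~~ is_unc (S0 u).
Proof.
move=> Hc; elim: t v => [|t IH] v /=; first by move=> H; exists v, 0; rewrite /= eqxx.
rewrite /step; case: ifP => [/andP[_ Hp]|_]; last exact: IH.
move=> _; have [u [j [Hw Hu]]] := IH _ Hp.
have [Ev|Ev] := pick_valid Hc t v.
  exists u, j.+1; split => //=; apply/existsP; exists (pick_at c t v).
  by rewrite Ev Hw.
by exists u, j; rewrite -Ev.
Qed.

Definition ssum (l : nat -> nat) (i : nat) := \sum_(m < i) l m.

Lemma path_hits T (c : picks V T) (q : nat -> V) (l : nat -> nat) k :
  ~~ is_unc (S0 (q 0)) ->
  (forall i, i < k -> exists t, ssum l i <= t < ssum l i + l i /\ pick_at c t (q i.+1) = q i) ->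
  forall j, j <= k -> ~~ is_unc (run S0 c (ssum l j) (q j)).
Proof.
move=> H0 Hh; elim => [|j IH] Hj; first by rewrite /ssum big_ord0.
have [t [/andP[H1 H2] Hp]] := Hh j Hj.
have Hq : ~~ is_unc (run S0 c t (q j)) by apply: (run_mono H1); apply: IH; apply: ltnW.
have := hit_color Hq Hp; apply: run_mono.
by rewrite /ssum big_ord_recr.
Qed.

Lemma path_of_walk j v u : walk E j v u ->
  exists q : nat -> V, [/\ q j = v, q 0 = u & forall i, i < j -> E (q i.+1) (q i)].
Proof.
elim: j v => [|j IH] v /=.
  by move/eqP ->; exists (fun _ => u).
move=> /existsP[w /andP[Evw Hw]]; have [q [Hqj Hq0 Hq]] := IH _ Hw.
exists (fun i => if i == j.+1 then v else q i); split => //.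
- by rewrite eqxx.
move=> i Hi; rewrite eqSS; case: eqP => [->|/eqP Hne].
  by rewrite Hqj (ltn_eqF (ltnSn j)).
rewrite (ltn_eqF Hi); apply: Hq; by rewrite ltn_neqAle Hne -ltnS.
Qed.

Lemma walk_along (q : nat -> V) j : (forall i, i < j -> E (q i.+1) (q i)) ->
  forall i d, i + d <= j -> walk E d (q (i + d)) (q i).
Proof.
move=> Hq i; elim => [|d IH] Hd /=; first by rewrite addn0.
have Hd' : i + d <= j by apply: leq_trans Hd; rewrite leq_add2l.
apply/existsP; exists (q (i + d)); rewrite (IH Hd') andbT addnS.
by apply: Hq; rewrite -addnS.
Qed.

End Dyn.

Section Paths.
Variable V : finType.
Variable E : rel V.

Lemma walk1 x y : E x y -> walk E 1 x y.
Proof. by move=> H; apply/existsP; exists y; rewrite H eqxx. Qed.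

Lemma walk_seg (q : nat -> V) k i j : (forall m, m < k -> E (q m.+1) (q m)) ->
  i <= j -> j <= k -> walk E (j - i) (q j) (q i).
Proof.
move=> Hq Hij Hjk.
have := walk_along Hq (i:=i) (d:=j - i); rewrite subnKC //; by apply.
Qed.

Lemma short_len (q : nat -> V) k : (forall i, i < k -> E (q i.+1) (q i)) ->
  (forall j, j < k -> ~~ walk E j (q k) (q 0)) -> k < #|V|.
Proof.
move=> Hq Hmin.
have Hinj : injective (fun i : 'I_k.+1 => q i).
  have key : forall i1 i2 : 'I_k.+1, i1 < i2 -> q i1 = q i2 -> False.
    move=> i1 i2 Hlt Heq.
    have Hi2 : i2 <= k by rewrite -ltnS.
    have W1 := walk_seg Hq (ltnW Hlt) Hi2.
    have W2 : walk E (k - i2) (q k) (q i2) by apply: walk_seg Hq Hi2 (leqnn k).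
    have W3 : walk E (i1 - 0) (q i1) (q 0) by apply: walk_seg Hq (leq0n _) (leq_trans (ltnW Hlt) Hi2).
    rewrite -Heq in W2; rewrite subn0 in W3.
    have W := walk_cat W2 W3.
    have : k - i2 + i1 < k by lia.
    by move/Hmin; rewrite W.
  move=> i1 i2 Heq; case: (ltngtP i1 i2) => H.
  - by case: (key _ _ H Heq).
  - by case: (key _ _ H (esym Heq)).
  - exact: val_inj.
by have := leq_card _ Hinj; rewrite card_ord.
Qed.

Lemma outdeg_sum x : outdeg E x = \sum_(w : V) (E x w : nat).
Proof.
rewrite /outdeg -sum1_card big_mkcond /=; apply: eq_bigr => w _.
by rewrite inE; case: (E x w).
Qed.

Lemma three_bound (q : nat -> V) k : symmetric E ->
  (forall i, i < k -> E (q i.+1) (q i)) ->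
  (forall j, j < k -> ~~ walk E j (q k) (q 0)) ->
  \sum_(i < k) outdeg E (q i.+1) <= 3 * #|V|.
Proof.
move=> Hsym Hq Hmin.
rewrite (eq_bigr _ (fun (i : 'I_k) _ => outdeg_sum (q i.+1))) exchange_big /=.
rewrite -[#|V|]sum1_card big_distrr /=; apply: leq_sum => w _; rewrite muln1.
set A := [set i : 'I_k | E (q i.+1) w].
have -> : \sum_(i < k) (E (q i.+1) w : nat) = #|A|.
  rewrite -sum1_card [RHS]big_mkcond /=; apply: eq_bigr => i _; rewrite inE.
  by case: (E _ _).
pose f := fun i : 'I_k => (Ordinal (ltn_pmod i (isT : 0 < 3))).
have Hinj : {in A &, injective f}.
  have key : forall i1 i2 : 'I_k, i1 \in A -> i2 \in A -> i1 < i2 -> i1 %% 3 = i2 %% 3 -> False.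
    move=> i1 i2; rewrite !inE => H1 H2 Hlt Hmod.
    have H3 : i1 + 3 <= i2 by lia.
    have Hi2 : i2 < k := ltn_ord i2.
    have Hi2' : i1 < k by lia.
    have W1 : walk E (k - i2.+1) (q k) (q i2.+1) by apply: walk_seg Hq Hi2 (leqnn k).
    have W2 : walk E 1 (q i2.+1) w by apply: walk1.
    have W3 : walk E 1 w (q i1.+1) by apply: walk1; rewrite Hsym.
    have W4 : walk E (i1.+1 - 0) (q i1.+1) (q 0) by exact: walk_seg Hq (leq0n _) Hi2'.
    have W := walk_cat (walk_cat (walk_cat W1 W2) W3) W4.
    have : k - i2.+1 + 1 + 1 + (i1.+1 - 0) < k by lia.
    by move/Hmin; rewrite W.
  move=> i1 i2 H1 H2 /(congr1 val) /= Heq; case: (ltngtP i1 i2) => H.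
  - by case: (key _ _ H1 H2 H Heq).
  - by case: (key _ _ H2 H1 H (esym Heq)).
  - exact: val_inj.
by have := @leq_card_in _ _ f A Hinj; rewrite card_ord.
Qed.

Variable S0 : state V.

Definition reach v := exists u j, walk E j v u /\ ~~ is_unc (S0 u).

Definition gpathP v (p : nat * (nat -> V)) :=
  (reach v -> [/\ p.2 p.1 = v, ~~ is_unc (S0 (p.2 0)),
      (forall i, i < p.1 -> E (p.2 i.+1) (p.2 i)) &
      (forall j, j < p.1 -> ~~ walk E j v (p.2 0))]) /\ (~ reach v -> p.1 = 0).

Lemma path_exists v : exists p, gpathP v p.
Proof.
case: (classic (reach v)) => Hr; last by exists (0, fun _ => v); split.
have [u [j [Hw Hu]]] := Hr.
have Hex : exists j, walk E j v u by exists j.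
case: (ex_minnP Hex) => m Hm Hmin.
have [q [Hqm Hq0 Hq]] := path_of_walk Hm.
exists (m, q); split => // _; split => //=; rewrite ?Hq0 //.
move=> j' Hj'; apply/negP => Hw'; have := Hmin _ Hw'; by rewrite leqNgt Hj'.
Qed.

Lemma paths_choice : exists (k : V -> nat) (q : V -> nat -> V),
  forall v, gpathP v (k v, q v).
Proof.
pose f v := proj1_sig (constructive_indefinite_description _ (path_exists v)).
exists (fun v => (f v).1), (fun v => (f v).2) => v.
rewrite -surjective_pairing; exact: (proj2_sig (constructive_indefinite_description _ (path_exists v))).
Qed.

End Paths.
From Stdlib Require Import Reals Lra.

Lemma iter_Rplus n (c : R) : iter n (Rplus c) 0%R = (INR n * c)%R.
Proof.
elim: n => [|n IH]; first by rewrite /= Rmult_0_l.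
rewrite iterS IH S_INR; ring.
Qed.

Lemma INR_expn a b : INR (expn a b) = (INR a ^ b)%R.
Proof.
elim: b => [|b IH]; first by [].

by rewrite expnS mult_INR IH.
Qed.

Lemma sumR_le (I : finType) (P : pred I) (F : I -> nat) (c : R) :
  (forall i, P i -> INR (F i) <= c)%R -> (0 <= c)%R ->
  (INR (\sum_(i | P i) F i) <= INR #|I| * c)%R.
Proof.
move=> HF Hc.
have H1 : (INR (\sum_(i | P i) F i) <= \big[Rplus/0%R]_(i | P i) c)%R.
  apply: (big_ind2 (fun (x : nat) (y : R) => INR x <= y)%R).
  - by rewrite /=; lra.
  - by move=> x1 x2 y1 y2 H1 H2; rewrite plus_INR; lra.
  - exact: HF.
apply: (Rle_trans _ _ _ H1); rewrite big_const iter_Rplus.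
apply: Rmult_le_compat_r => //; apply: le_INR; apply/leP; exact: max_card.
Qed.

Lemma ssum_mono l i k : i <= k -> ssum l i <= ssum l k.
Proof.
elim: k => [|k IH]; first by rewrite leqn0 => /eqP ->.
rewrite leq_eqVlt => /orP[/eqP -> //|Hi].
apply: leq_trans (IH Hi) _; rewrite /ssum big_ord_recr /=; exact: leq_addr.
Qed.

Section Core.
Variable V : finType.
Variable E : rel V.
Variable S0 : state V.
Variable T : nat.

Definition good_set := [set c : picks V T | valid_picks E c & converged_by E S0 c].
Definition nc_set := [set c : picks V T | valid_picks E c & ~~ converged_by E S0 c].
Definition valid_set := [set c : picks V T | valid_picks E c].

Lemma valid_nonempty : 0 < #|valid_set|.
Proof.
apply/card_gt0P.
exists [ffun t => [ffun v => if [pick w | E v w] is Some w then w else v]].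
rewrite inE; apply/forallP => t; apply/forallP => v; rewrite !ffunE.
case: pickP => [w Hw|H].
  case: ifP => // /negbT; rewrite negb_exists => /forallP /(_ w).
  by rewrite Hw.
case: ifP => // /existsP[w Hw]; by rewrite H in Hw.
Qed.

Lemma card_split : #|good_set| + #|nc_set| = #|valid_set|.
Proof.
rewrite -(cardsID [set c : picks V T | converged_by E S0 c] valid_set).
congr (_ + _); apply: eq_card => c; rewrite !inE //; by rewrite andbC.
Qed.

Variables (k : V -> nat) (q : V -> nat -> V) (l : V -> nat -> nat).
Hypothesis Hpath : forall v, (exists u j, walk E j v u /\ ~~ is_unc (S0 u)) ->
   q v (k v) = v /\ ~~ is_unc (S0 (q v 0)).
Hypothesis Hsum : forall v, ssum (l v) (k v) <= T.
Hypothesis Hedge : forall v i, i < k v -> E (q v i.+1) (q v i).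

Definition bad v i := badset E T (q v i.+1) (q v i) (ssum (l v) i) (l v i).

Lemma nc_bad c : c \in nc_set -> exists v i, i < k v /\ c \in bad v i.
Proof.
rewrite inE => /andP[Hc Hnc]; apply: NNPP => Hn; move/negP: Hnc; apply.
apply/existsP; exists ord_max; rewrite /=.
apply/forallP => v; apply/forallP => u; apply/implyP => Evu; apply/implyP => Hv.
apply/negPn/negP => Hu.
have [u' [j [Hw Hu']]] := reach_of_colored Hc Hu.
have Hr : exists u j, walk E j v u /\ ~~ is_unc (S0 u).
  exists u', j.+1; split => //=; apply/existsP; exists u; by rewrite Evu.
have [Hqk Hq0] := Hpath Hr.
have Hh : forall i, i < k v -> exists t, ssum (l v) i <= t < ssum (l v) i + l v i /\
                     pick_at c t (q v i.+1) = q v i.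
  move=> i Hi; have : c \notin bad v i by apply/negP => Hb; apply: Hn; exists v, i.
  rewrite /bad /badset inE Hc /= negb_forall => /existsP[t].
  rewrite negb_imply negbK => /andP[Ht /eqP Hct].
  by exists t; rewrite Ht pick_ord.
have := path_hits Hq0 Hh (leqnn (k v)); rewrite Hqk => /(run_mono (t' := T)) H.
by have := H (Hsum v); rewrite Hv.
Qed.

Variable n : nat.
Hypothesis HV : #|V| = n.
Hypothesis Hk : forall v, k v <= n.

Lemma nc_le : #|nc_set| <= \sum_(v : V) \sum_(i < n | i < k v) #|bad v i|.
Proof.
rewrite -sum1_card.
apply: leq_trans (_ : \sum_(c in nc_set) \sum_(v : V) \sum_(i < n | i < k v) (c \in bad v i) <= _).
  apply: leq_sum => c /nc_bad [v [i [Hi Hb]]].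
  have Hin : i < n by apply: leq_trans Hi (Hk v).
  rewrite (bigD1 v) //= (bigD1 (Ordinal Hin)) //= Hb.
  by rewrite -addnA leq_addr.
apply: leq_trans (_ : \sum_(c : picks V T) \sum_(v : V) \sum_(i < n | i < k v) (c \in bad v i) <= _).
  by rewrite [X in _ <= X](bigID (fun c => c \in nc_set)) /= leq_addr.
rewrite exchange_big /=; apply: leq_sum => v _.
rewrite exchange_big /=; apply: leq_sum => i _.
by rewrite -sum1_card [X in _ <= X]big_mkcond /=; apply: leq_sum => c _; case: (c \in bad v i).
Qed.

Variable beta : R.
Hypothesis Hbeta0 : (0 <= beta)%R.
Hypothesis Hbeta : forall v i, i < k v ->
  ((INR (outdeg E (q v i.+1)).-1 / INR (outdeg E (q v i.+1))) ^ (l v i) <= beta)%R.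

Lemma bad_le v i : i < k v -> (INR #|bad v i| <= INR #|valid_set| * beta)%R.
Proof.
move=> Hi.
have Ex := Hedge Hi.
have Hal : ssum (l v) i + l v i <= T.
  have -> : ssum (l v) i + l v i = ssum (l v) i.+1 by rewrite /ssum big_ord_recr.
  exact: leq_trans (ssum_mono (l v) Hi) (Hsum v).
have Hc := card_bad Ex Hal.
have Hb := Hbeta Hi.
set d := outdeg E (q v i.+1) in Hc Hb *.
have Hd : 0 < d by rewrite /d /outdeg card_gt0; apply/set0Pn; exists (q v i); rewrite inE.
have HdR : (0 < INR d)%R by apply: lt_0_INR; apply/ltP.
have Hpow : (0 < INR d ^ l v i)%R by apply: pow_lt.
have := f_equal INR Hc; rewrite !mult_INR !INR_expn => Heq.
apply: (Rle_trans _ (INR #|valid_set| * ((INR d.-1 / INR d) ^ l v i))).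
  right; rewrite Rpow_mult_distr pow_inv -Rmult_assoc -Heq /bad.
  rewrite Rmult_assoc Rinv_r ?Rmult_1_r //; lra.
apply: Rmult_le_compat_l; [exact: pos_INR|exact: Hb].
Qed.

Lemma core : (1 - INR n * INR n * beta <= prob_conv_by E T S0)%R.
Proof.
have HvR : (0 < INR #|valid_set|)%R by apply: lt_0_INR; apply/ltP; exact: valid_nonempty.
have Hs := card_split.
have Hnc : (INR #|nc_set| <= INR n * (INR n * (INR #|valid_set| * beta)))%R.
  apply: Rle_trans (le_INR _ _ (leP nc_le)) _.
  rewrite -HV; apply: sumR_le; last first.
    apply: Rmult_le_pos; [exact: pos_INR|apply: Rmult_le_pos => //; exact: pos_INR].
  move=> v _; rewrite HV -[X in (_ <= INR X * _)%R](card_ord n).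
  apply: sumR_le; last by apply: Rmult_le_pos => //; exact: pos_INR.
  by move=> i Hi; apply: bad_le.
rewrite /prob_conv_by -/good_set -/valid_set.
have := f_equal INR Hs; rewrite plus_INR => Hs'.
apply: (Rmult_le_reg_r (INR #|valid_set|)) => //.
have -> : (INR #|good_set| / INR #|valid_set| * INR #|valid_set| = INR #|good_set|)%R.
  by field; lra.
nra.
Qed.

End Core.
Section RealFacts.
Local Open Scope R_scope.

Lemma exp_le x y : x <= y -> exp x <= exp y.
Proof. move=> [H|->]; [left; exact: exp_increasing | right; reflexivity]. Qed.

Lemma ln_ge0 x : 1 <= x -> 0 <= ln x.
Proof.
move=> [H|<-]; last by rewrite ln_1; lra.
rewrite -ln_1; left; apply: ln_increasing => //; lra.
Qed.

Lemma ln2_bounds : 0 < ln 2 < 1.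
Proof.
have H1 := ln_lt_2.
have H2 : 2 < exp 1 by have := exp_ineq1 1; lra.
have H3 : ln 2 < ln (exp 1) by apply: ln_increasing => //; lra.
rewrite ln_exp in H3; lra.
Qed.

Lemma log2_ge x : 1 <= x -> ln x <= ln x / ln 2.
Proof.
move=> Hx; have H0 := ln_ge0 Hx; have [H1 H2] := ln2_bounds.
apply: (Rmult_le_reg_r (ln 2)) => //.
replace (ln x / ln 2 * ln 2) with (ln x) by (field; lra).
nra.
Qed.

Lemma exp_pow_nat a L : exp a ^ L = exp (INR L * a).
Proof.
elim: L => [|L IH]; first by rewrite /= Rmult_0_l exp_0.
by rewrite S_INR /= IH -exp_plus; f_equal; ring.
Qed.

Lemma ratio_le (d L : nat) : leq 1 d -> (INR d.-1 / INR d) ^ L <= exp (- (INR L / INR d)).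
Proof.
move=> Hd.
have HdR : 0 < INR d by apply: lt_0_INR; apply/ltP.
have Hd1 : INR d.-1 = INR d - 1.
  by rewrite -{2}(prednK Hd) S_INR; ring.
have H0 : 0 <= INR d.-1 / INR d.
  by apply: Rmult_le_pos; [exact: pos_INR | left; apply: Rinv_0_lt_compat].
have H1 : INR d.-1 / INR d <= exp (- (1 / INR d)).
  have := exp_ineq1_le (- (1 / INR d)).
  replace (INR d.-1 / INR d) with (1 + - (1 / INR d)) by (rewrite Hd1; field; lra).
  done.
apply: Rle_trans (pow_incr _ _ L (conj H0 H1)) _.
rewrite exp_pow_nat; right; f_equal; field; lra.
Qed.

Lemma final_bound X (n : nat) : leq 1 n -> 4 * ln (INR n) - 2 <= X ->
  exp (- X) <= exp 2 / INR n ^ 4.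
Proof.
move=> Hn HX.
have HnR : 1 <= INR n by apply: (le_INR 1); apply/leP.
apply: Rle_trans (exp_le (x := - X) (y := 2 - 4 * ln (INR n)) _) _; first lra.
right; rewrite /Rminus exp_plus.
have -> : exp (- (4 * ln (INR n))) = / INR n ^ 4.
  rewrite exp_Ropp; f_equal.
  have -> : 4 * ln (INR n) = INR 4 * ln (INR n) by rewrite /=; ring.
  by rewrite -exp_pow_nat exp_ln //; lra.
by [].
Qed.

Lemma div_le a b c d : 0 < b -> 0 < d -> a * d <= c * b -> a / b <= c / d.
Proof.
move=> Hb Hd H.
apply: (Rmult_le_reg_r (b * d)); first nra.
replace (a / b * (b * d)) with (a * d) by (field; lra).
replace (c / d * (b * d)) with (c * b) by (field; lra).
done.
Qed.

Lemma final_real (n : nat) : leq 1 n ->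
  INR n * INR n * (exp 2 / INR n ^ 4) <= 20 / (INR n + 1).
Proof.
move=> Hn.
have HnR : 1 <= INR n by apply: (le_INR 1); apply/leP.
have He : exp 2 <= 9.
  have -> : (2 = INR 2 * 1)%R by rewrite /=; ring.
  rewrite -exp_pow_nat /=; have := exp_le_3; have := exp_pos 1; nra.
replace (INR n * INR n * (exp 2 / INR n ^ 4)) with (exp 2 / (INR n * INR n)) by (field; lra).
apply: div_le; try nra.
Qed.

Lemma delta_lim (eps : R) : 0 < eps ->
  exists N : nat, forall n : nat, leq N n -> Rabs (20 / (INR n + 1)) < eps.
Proof.
move=> He; have [N HN] := INR_unbounded (20 / eps).
exists N => n Hn.
have HnN : INR N <= INR n by apply: le_INR; apply/leP.
have Hp : 0 < INR n + 1 by have := pos_INR n; lra.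
rewrite Rabs_pos_eq; last by apply: Rmult_le_pos; [lra | left; apply: Rinv_0_lt_compat].
have H20 : 20 < eps * (INR n + 1).
  have : 20 / eps < INR n + 1 by lra.
  move=> H; apply: (Rmult_lt_reg_r (/ eps)); first by apply: Rinv_0_lt_compat.
  replace (eps * (INR n + 1) * / eps) with (INR n + 1) by (field; lra).
  exact: H.
apply: (Rmult_lt_reg_r (INR n + 1)) => //.
replace (20 / (INR n + 1) * (INR n + 1)) with 20 by (field; lra).
done.
Qed.
End RealFacts.

Lemma prob_ge0 (V : finType) (E : rel V) T S0 : (0 <= prob_conv_by E T S0)%R.
Proof.
have HvR : (0 < INR #|valid_set E T|)%R.
  apply: lt_0_INR; apply/ltP; exact: valid_nonempty.
rewrite /prob_conv_by; apply: Rmult_le_pos; first exact: pos_INR.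
left; apply: Rinv_0_lt_compat; exact: HvR.
Qed.

Lemma ssum_const L k : ssum (fun _ => L) k = k * L.
Proof. by rewrite /ssum sum_nat_const card_ord. Qed.

Section Main.
Variable V : finType.
Variable E : rel V.
Variable S0 : state V.
Variable n : nat.
Hypothesis HV : #|V| = n.
Hypothesis Hn : 1 <= n.
Variables (k : V -> nat) (q : V -> nat -> V).
Hypothesis Hkq : forall v, gpathP E S0 v (k v, q v).

Lemma Hpath' v : reach E S0 v -> q v (k v) = v /\ ~~ is_unc (S0 (q v 0)).
Proof. by move=> Hr; have /= [-> -> _ _] := (proj1 (Hkq v)) Hr. Qed.

Lemma reach_of_i v i : i < k v -> reach E S0 v.
Proof.
move=> Hi; apply: NNPP => Hr; have := (proj2 (Hkq v)) Hr; rewrite /= => H.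
by rewrite H in Hi.
Qed.

Lemma Hedge' v i : i < k v -> E (q v i.+1) (q v i).
Proof. move=> Hi; have /= [_ _ H _] := (proj1 (Hkq v)) (reach_of_i Hi); exact: H. Qed.

Lemma Hmin' v : reach E S0 v -> forall j, j < k v -> ~~ walk E j (q v (k v)) (q v 0).
Proof. move=> Hr; have /= [-> _ _ H] := (proj1 (Hkq v)) Hr; exact: H. Qed.

Lemma Hk' v : k v <= n.
Proof.
case: (classic (reach E S0 v)) => Hr; last by have := (proj2 (Hkq v)) Hr => /= ->.
rewrite -HV; apply: ltnW; apply: (short_len (q := q v)).
- by move=> i Hi; apply: Hedge'.
- exact: Hmin'.
Qed.

Lemma outdeg_pos v i : i < k v -> 0 < outdeg E (q v i.+1).
Proof.
move=> Hi; rewrite /outdeg card_gt0; apply/set0Pn; exists (q v i).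
by rewrite inE; apply: Hedge'.
Qed.

End Main.

Lemma lnn_ge0 (n : nat) : 1 <= n -> (0 <= ln (INR n) <= ln (INR n) / ln 2)%R.
Proof.
move=> Hn; have HnR : (1 <= INR n)%R by apply: (le_INR 1); apply/leP.
split; [exact: ln_ge0 | exact: log2_ge].
Qed.

Theorem theorem3p2 :
  exists delta : nat -> R,
    (forall eps : R, (0 < eps)%R ->
       exists N : nat, forall n : nat, (N <= n)%N -> (Rabs (delta n) < eps)%R) /\
    forall (n : nat) (V : finType) (E : rel V),
      #|V| = n ->
      irreflexive E ->
      forall S0 : V -> color,
        (forall (D : nat) (T : nat),
           is_diam E D ->
           let bound := (4 * INR D * INR (maxoutdeg E) * (ln (INR n) / ln 2))%R in
           (INR T <= bound < INR T + 1)%R ->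
           (1 - delta n <= prob_conv_by E T S0)%R) /\
        (symmetric E ->
         forall T : nat,
           let bound := (20 * INR n * (ln (INR n) / ln 2))%R in
           (INR T <= bound < INR T + 1)%R ->
           (1 - delta n <= prob_conv_by E T S0)%R).
Proof.
exists (fun n => 20 / (INR n + 1))%R; split; first exact: delta_lim.
move=> n V E HV Hirr S0.
have Hsmall : forall T, n = 0 -> (1 - 20 / (INR n + 1) <= prob_conv_by E T S0)%R.
  move=> T ->; have := prob_ge0 E T S0; rewrite /=; lra.
have [k [q Hkq]] := paths_choice E S0.
have Hy := lnn_ge0.
set y := (ln (INR n) / ln 2)%R.
split.
- move=> D T Hdiam bound [HT1 HT2]; rewrite /bound in HT1 HT2.
  case: (posnP n) => [/Hsmall|Hn]; first by apply.
  have [H0 H1] := Hy n Hn; rewrite -/y in H1.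
  pose L := T %/ D.
  have HkD : forall v, k v <= D.
    move=> v; case: (classic (reach E S0 v)) => Hr; last by have := (proj2 (Hkq v)) Hr => /= ->.
    apply: (proj2 Hdiam v (q v 0)); split.
      have := walk_seg (q := q v) (i := 0) (j := k v) (fun i Hi => Hedge' Hkq Hi) (leq0n _) (leqnn _).
      by rewrite subn0 (proj1 (Hpath' Hkq Hr)).
    by move=> j Hj; have := Hmin' Hkq Hr Hj; rewrite (proj1 (Hpath' Hkq Hr)).
  apply: (Rle_trans _ (1 - INR n * INR n * (exp 2 / INR n ^ 4))).
    have := final_real Hn; lra.
  apply: (core (l := fun _ _ => L)).
  + exact: Hpath' Hkq.
  + move=> v; rewrite ssum_const; apply: leq_trans (leq_divM T D).
    by rewrite -/L [X in X <= _]mulnC leq_mul2l HkD orbT.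
  + exact: (Hedge' Hkq).
  + exact: HV.
  + exact: (Hk' HV Hkq).
  + by left; apply: Rdiv_lt_0_compat; [exact: exp_pos | apply: pow_lt; apply: lt_0_INR; apply/ltP].
  + move=> v i Hi.
    have Hd := outdeg_pos Hkq Hi.
    set d := outdeg E (q v i.+1) in Hd *.
    apply: Rle_trans (ratio_le L Hd) _; apply: final_bound => //.
    have HD1 : 1 <= D.
      have Ex := Hedge' Hkq Hi.
      apply: (proj2 Hdiam (q v i.+1) (q v i)); split; first exact: walk1.
      move=> j; rewrite ltnS leqn0 => /eqP -> /=; apply/negP => /eqP Heq.
      by rewrite Heq (Hirr (q v i)) in Ex.
    have Hdm : d <= maxoutdeg E.
      rewrite /d /maxoutdeg; exact: leq_bigmax.
    have Hc := ltn_ceil T HD1.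
    have HcR : (INR T + 1 <= (INR L + 1) * INR D)%R.
      rewrite -S_INR -S_INR -mult_INR; apply: le_INR; apply/leP; exact: Hc.
    have HdR : (1 <= INR d)%R by apply: (le_INR 1); apply/leP.
    have HdmR : (INR d <= INR (maxoutdeg E))%R by apply: le_INR; apply/leP.
    have HDR : (1 <= INR D)%R by apply: (le_INR 1); apply/leP.
    have HLR := pos_INR L.
    have HL1 : (4 * INR (maxoutdeg E) * y < INR L + 1)%R.
      apply: (Rmult_lt_reg_r (INR D)); first lra.
      nra.
    have Hkey : (INR d * (4 * y - 2) <= INR L)%R.
      case: (Rle_lt_dec 0 (4 * y - 2)) => Hs.
      * have : (INR d * (4 * y - 2) <= INR (maxoutdeg E) * (4 * y - 2))%R.
          by apply: Rmult_le_compat_r.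
        nra.
      * nra.
    apply: (Rle_trans _ (4 * y - 2)); first lra.
    apply: (Rmult_le_reg_l (INR d)); first lra.
    replace (INR d * (INR L / INR d))%R with (INR L) by (field; lra).
    exact: Hkey.
- move=> Hsym T bound [HT1 HT2]; rewrite /bound in HT1 HT2.
  case: (posnP n) => [/Hsmall|Hn]; first by apply.
  have [H0 H1] := Hy n Hn; rewrite -/y in H1.
  pose M := T %/ (3 * n).
  apply: (Rle_trans _ (1 - INR n * INR n * (exp 2 / INR n ^ 4))).
    have := final_real Hn; lra.
  apply: (core (l := fun v i => outdeg E (q v i.+1) * M)).
  + exact: Hpath' Hkq.
  + move=> v; rewrite /ssum -big_distrl /=.
    apply: leq_trans (leq_divM T (3 * n)); rewrite -/M [X in _ <= X]mulnC leq_mul2r; apply/orP; right.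
    case: (classic (reach E S0 v)) => Hr; last first.
      by have := (proj2 (Hkq v)) Hr => /= ->; rewrite big_ord0.
    rewrite -HV; apply: three_bound => //.
    * by move=> i Hi; apply: (Hedge' Hkq).
    * exact: (Hmin' Hkq Hr).
  + exact: (Hedge' Hkq).
  + exact: HV.
  + exact: (Hk' HV Hkq).
  + by left; apply: Rdiv_lt_0_compat; [exact: exp_pos | apply: pow_lt; apply: lt_0_INR; apply/ltP].
  + move=> v i Hi.
    have Hd := outdeg_pos Hkq Hi.
    set d := outdeg E (q v i.+1) in Hd *.
    apply: Rle_trans (ratio_le (d * M) Hd) _; apply: final_bound => //.
    have HdR : (1 <= INR d)%R by apply: (le_INR 1); apply/leP.
    have -> : (INR (d * M) / INR d = INR M)%R by rewrite mult_INR; field; lra.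
    have H3n : 0 < 3 * n by rewrite muln_gt0.
    have Hc := ltn_ceil T H3n.
    have HcR : (INR T + 1 <= (INR M + 1) * (3 * INR n))%R.
      have -> : (3 * INR n = INR (3 * n))%R by rewrite mult_INR /=; ring.
      rewrite -S_INR -S_INR -mult_INR; apply: le_INR; apply/leP; exact: Hc.
    have HnR : (1 <= INR n)%R by apply: (le_INR 1); apply/leP.
    have HM : (20 * y < 3 * (INR M + 1))%R.
      apply: (Rmult_lt_reg_r (INR n)); first lra.
      nra.
    nra.
Qed.
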